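(* Let $k\ge1$, $n\ge2$, $\eta\in[0,1/2)$, $p\le n^k$, and let $m$ be such that $\frac mp\ge\frac{24k}{(1-2\eta)^2}\log n$. For each $u\in[p]$ let $\mathcal H_u=\mathcal H_u^{(L)}\sqcup\mathcal H_u^{(R)}$ with $|\mathcal H_u^{(L)}|=|\mathcal H_u^{(R)}|=\frac m{2p}$, let $\xi_u(C)$, $u\in[p]$, $C\in\mathcal H_u$, be i.i.d. random variables equal to $-1$ with probability $\eta$ and $+1$ otherwise, and let $P_u\subseteq\mathcal H_u^{(L)}\times\mathcal H_u^{(R)}$ be fixed sets (independent of the $\xi$'s) with $|P_u|=(1-\varepsilon_u)\frac{m^2}{4p^2}$, $\varepsilon_u\in[0,1]$, and $\frac1p\sum_{u}\varepsilon_u\le\varepsilon$. Run the following procedure given the $P_u$ and the values $\xi_u(C)\xi_u(C')$ for $(C,C')\in P_u$: for each $u$, if $\varepsilon_u\ge1/3$ set $\mathcal A^{(1)}_u=\mathcal H_u$, $\mathcal A^{(2)}_u=\emptyset$; otherwise let $G_u$ be the graph on vertex set $\mathcal H_u$ with edge set $P_u$, let $S_u$ be (the vertex set of) a largest connected component of $G_u$, compute $z\in\{-1,1\}^{S_u}$ with $z_Cz_{C'}=\xi_u(C)\xi_u(C')$ for all edges $(C,C')$ of $G_u$ inside $S_u$ (by fixing $z$ at one vertex and propagating), replace $z$ by $-z$ if $z$ has more than $|S_u|/2$ entries equal to $-1$ (ties broken arbitrarily), and set $\mathcal A^{(1)}_u=\mathcal H_u\setminus S_u$, $\mathcal A^{(2)}_u=\{C\in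 S_u:z_C=-1\}$. Then (1) $\sum_{u\in[p]}|\mathcal A^{(1)}_u|\le4\varepsilon m$, and (2) with probability at least $1-n^{-k}$ over the $\xi$'s, for every $u\in[p]$, $\mathcal A^{(2)}_u=\{C\in\mathcal H_u:\xi_u(C)=-1\}\setminus\mathcal A^{(1)}_u$. *)

(* Defs.v *)
From HB Require Import structures.
From mathcomp Require Import all_boot all_order all_algebra.
From mathcomp Require Import boolp reals exp.
Set Implicit Arguments. Unset Strict Implicit. Unset Printing Implicit Defensive.
Import Order.TTheory GRing.Theory Num.Theory.
Local Open Scope ring_scope.

(* Vertex set H_u = H_u^(L) ⊔ H_u^(R), each half of size h. *)
Notation Hv h := ('I_h + 'I_h)%type.

Definition gedge (h : nat) (P : {set 'I_h * 'I_h}) : rel (Hv h) :=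
  fun x y => match x, y with
             | inl a, inr b => (a, b) \in P
             | inr b, inl a => (a, b) \in P
             | _, _ => false
             end.

Definition component (h : nat) (P : {set 'I_h * 'I_h}) (x : Hv h) : {set Hv h} :=
  [set y | connect (gedge P) x y].

Definition largest_component (h : nat) (P : {set 'I_h * 'I_h}) (S : {set Hv h}) : Prop :=
  (exists x, S = component P x) /\ (forall x, (#|component P x| <= #|S|)%N).

Definition sgnb (b : bool) : int := if b then -1 else 1.

(* (A1, A2) is a possible output of the procedure for block u, given the
   fixed edge set P, epsilon_u, and the signs xi (xi C = true iff xi_u(C) = -1).
   All arbitrary choices (which largest component, which propagation, tie-breaks)
   are allowed; only products xi(C) xi(C') along edges are used. *)
Definition valid_output (R : realType) (h : nat) (P : {set 'I_h * 'I_h})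
    (epsu : R) (xi : Hv h -> bool) (A1 A2 : {set Hv h}) : Prop :=
  if 1 / 3 <= epsu then A1 = setT /\ A2 = set0
  else exists (S : {set Hv h}) (z : Hv h -> bool),
    [/\ largest_component P S,
        (forall C C', C \in S -> C' \in S -> gedge P C C' ->
           sgnb (z C) * sgnb (z C') = sgnb (xi C) * sgnb (xi C')),
        (2 * #|[set C in S | z C]| <= #|S|)%N,
        A1 = ~: S &
        A2 = [set C in S | z C]].

Definition prob (R : realType) (I : finType) (eta : R)
    (E : {ffun I -> bool} -> Prop) : R :=
  \sum_(w : {ffun I -> bool} | `[< E w >]) \prod_(i : I) (if w i then eta else 1 - eta).

(* Main.v *)
Require Import Defs.
From HB Require Import structures.
From mathcomp Require Import all_boot all_order all_algebra.
From mathcomp Require Import boolp reals exp sequences.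
From mathcomp Require Import zify ring lra.
Set Implicit Arguments. Unset Strict Implicit. Unset Printing Implicit Defensive.
Import Order.TTheory GRing.Theory Num.Theory.
Local Open Scope ring_scope.


Section Graph.
Variables (h : nat) (P : {set 'I_h * 'I_h}).

Lemma gedge_sym : symmetric (gedge P).
Proof. by case=> a [b|b] //; case. Qed.

Lemma csym : connect_sym (gedge P).
Proof. exact: sym_connect_sym gedge_sym. Qed.

Lemma comp_eq x y : y \in component P x -> component P y = component P x.
Proof.
rewrite inE => cxy; apply/setP => z; rewrite !inE.
by rewrite (same_connect csym cxy).
Qed.

Lemma comp_self x : x \in component P x.
Proof. by rewrite inE connect0. Qed.

Lemma comp_edge x a b : a \in component P x -> gedge P a b -> b \in component P x.
Proof.
rewrite !inE => cxa eab; apply: connect_trans cxa _; exact: connect1.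
Qed.

Definition SL (S : {set Hv h}) : {set 'I_h} := [set i | inl i \in S].
Definition SR (S : {set Hv h}) : {set 'I_h} := [set i | inr i \in S].

Lemma card_split (S : {set Hv h}) : #|S| = (#|SL S| + #|SR S|)%N.
Proof.
rewrite -!sum1_card big_sumType /=; congr (_ + _)%N; apply: eq_bigl => i;
by rewrite !inE.
Qed.

Lemma edges_bound1 x0 :
  (#|P| <= #|SL (component P x0)| * #|SR (component P x0)| + (h - #|SL (component P x0)|) * (h - #|SR (component P x0)|))%N.
Proof.
set S := component P x0.
have sub : P \subset setX (SL S) (SR S) :|: setX (~: SL S) (~: SR S).
  apply/subsetP => -[i j] Pij.
  have e1 : gedge P (inl i) (inr j) by [].
  have e2 : gedge P (inr j) (inl i) by [].
  have E : (inl i \in S) = (inr j \in S).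
    by apply/idP/idP => H; [exact: comp_edge H e1 | exact: comp_edge H e2].
  move: E; rewrite !(in_setU, in_setX, in_setC) /SL /SR !in_set /= => ->.
  by case: connect.
apply: leq_trans (subset_leq_card sub) _.
rewrite cardsU !cardsX.
have c1 : #|~: SL S| = (h - #|SL S|)%N by rewrite cardsCs card_ord setCK.
have c2 : #|~: SR S| = (h - #|SR S|)%N by rewrite cardsCs card_ord setCK.
rewrite c1 c2; exact: leq_subr.
Qed.

Lemma edges_bound2 s : (forall x, #|component P x| <= s)%N -> (#|P| <= h * s)%N.
Proof.
move=> Hs.
have -> : #|P| = (\sum_(i < h) #|[set j | (i, j) \in P]|)%N.
  rewrite -sum1_card.
  rewrite (eq_bigr (fun i => \sum_(j | (i, j) \in P) 1)%N); last first.
    by move=> i _; rewrite -sum1_card; apply: eq_bigl => j; rewrite inE.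
  rewrite (pair_big_dep xpredT (fun i j => (i, j) \in P) (fun _ _ => 1%N)).
  by apply: eq_bigl => -[i j].
rewrite -[h in (h * s)%N]card_ord -sum_nat_const.
apply: leq_sum => i _.
apply: leq_trans (Hs (inl i)).
apply: leq_trans (_ : #|SR (component P (inl i))| <= _)%N; last first.
  by rewrite (card_split (component P (inl i))) leq_addl.
apply: subset_leq_card; apply/subsetP => j; rewrite !inE => Pij.
have e1 : gedge P (inl i) (inr j) by [].
by have := comp_edge (comp_self (inl i)) e1; rewrite inE.
Qed.

End Graph.
Lemma arith (R : realFieldType) (h a b e : R) :
  0 <= a <= h -> 0 <= b <= h -> 0 <= e -> e < 1/3 ->
  (1 - e) * h ^+ 2 <= a * b + (h - a) * (h - b) ->
  (1 - e) * h ^+ 2 <= h * (a + b) ->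
  2 * h - (a + b) <= 2 * e * h.
Proof.
move=> /andP[a0 ah] /andP[b0 bh] e0 e13 H1 H2.
have Hab : 4 * (a * b) <= (a + b) ^+ 2.
  have := sqr_ge0 (a - b).
  have -> : (a - b) ^+ 2 = (a + b) ^+ 2 - 4 * (a * b) by ring.
  lra.
set d := 2 * h - (a + b).
have sd : a + b = 2 * h - d by rewrite /d; ring.
have d0 : 0 <= d by rewrite /d; lra.
have H3 : h * d - d ^+ 2 / 2 <= e * h ^+ 2.
  have E1 : a * b + (h - a) * (h - b) = h ^+ 2 - h * (a + b) + 2 * (a * b) by ring.
  have E2 : h * d - d ^+ 2 / 2 = h * (a + b) - (a + b) ^+ 2 / 2 by rewrite sd; field.
  have E3 : (1 - e) * h ^+ 2 = h ^+ 2 - e * h ^+ 2 by ring.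
  rewrite E2; rewrite E1 E3 in H1; lra.
have H4 : h * d <= (1 + e) * h ^+ 2.
  have E4 : h * (a + b) = 2 * h ^+ 2 - h * d by rewrite sd; field.
  have E3 : (1 - e) * h ^+ 2 = h ^+ 2 - e * h ^+ 2 by ring.
  have E5 : (1 + e) * h ^+ 2 = h ^+ 2 + e * h ^+ 2 by ring.
  rewrite E4 E3 in H2; rewrite E5; lra.
have [h0|hp] : h = 0 \/ 0 < h by lra.
  move: d0 sd; rewrite h0; lra.
have [dh|dh] := lerP d h.
  have P1 : 0 <= d * (h - d) by apply: mulr_ge0; lra.
  have P2 : h * (d - 2 * e * h) <= 0.
    have -> : h * (d - 2 * e * h) = 2 * (h * d / 2 - e * h ^+ 2) by field.
    have : d * (h - d) = h * d - d ^+ 2 by ring.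
    lra.
  have : d - 2 * e * h <= 0.
    by rewrite -(pmulr_rle0 _ hp).
  lra.
exfalso.
have d43 : d <= (1 + e) * h.
  rewrite -(ler_pM2l hp); have -> : h * ((1 + e) * h) = (1 + e) * h ^+ 2 by ring.
  exact: H4.
have P1 : 0 <= (d - h) * (h - d / 2) by apply: mulr_ge0; lra.
have P2 : 0 < h * (h / 3 - e * h).
  apply: mulr_gt0 => //; have : 0 < (1/3 - e) * h by apply: mulr_gt0; lra.
  have -> : (1/3 - e) * h = h / 3 - e * h by field. done.
have E : (d - h) * (h - d / 2) = h * d - d ^+ 2 / 2 - h * (h - d / 2) by field.
have P3 : h * (h / 3) < h * (h - d / 2).
  rewrite ltr_pM2l //; lra.
have E6 : h * (h / 3 - e * h) = h * (h / 3) - e * h ^+ 2 by field.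
lra.
Qed.

Lemma comp_size (R : realType) h (P : {set 'I_h * 'I_h}) (e : R) S :
  0 <= e -> e < 1/3 -> (#|P|%:R : R) = (1 - e) * h%:R ^+ 2 ->
  largest_component P S -> 2 * h%:R - (#|S|%:R : R) <= 2 * e * h%:R.
Proof.
move=> e0 e13 HP [[x0 ->] Hmax].
have ah : (#|SL (component P x0)| <= h)%N.
  by rewrite -[h in (_ <= h)%N]card_ord max_card.
have bh : (#|SR (component P x0)| <= h)%N.
  by rewrite -[h in (_ <= h)%N]card_ord max_card.
have B1 := edges_bound1 P x0.
have B2 := edges_bound2 Hmax.
rewrite card_split in B2 *.
move: B1 B2; rewrite -(ler_nat R) => B1; rewrite -(ler_nat R) => B2.
rewrite !natrD !natrM !natrB // HP in B1.
rewrite !natrM natrD HP in B2.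
rewrite natrD.
apply: arith => //.
- by rewrite ler0n ler_nat.
- by rewrite ler0n ler_nat.
Qed.

Lemma A1_bound (R : realType) h (P : {set 'I_h * 'I_h}) (e : R) xi A1 A2 :
  0 <= e -> (#|P|%:R : R) = (1 - e) * h%:R ^+ 2 ->
  valid_output P e xi A1 A2 -> (#|A1|%:R : R) <= 8 * e * h%:R.
Proof.
move=> e0 HP; rewrite /valid_output; case: ifP => He.
  move=> [-> _]; rewrite cardsT card_sum card_ord natrD.
  have h0 : (0 : R) <= h%:R by rewrite ler0n.
  have : 0 <= h%:R * (8 * e - 2) by apply: mulr_ge0 => //; lra.
  have -> : (h%:R : R) * (8 * e - 2) = 8 * e * h%:R - (h%:R + h%:R) by ring.
  lra.
move=> [S [z [HS _ _ -> _]]].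
have e13 : e < 1/3 by rewrite ltNge He.
have := comp_size e0 e13 HP HS.
have := cardsC S; rewrite card_sum card_ord => cS.
have -> : #|~: S| = ((h + h) - #|S|)%N by rewrite -cS addKn.
rewrite natrB; last by rewrite -cS leq_addr.
have h0 : (0 : R) <= e * h%:R by apply: mulr_ge0 => //; rewrite ler0n.
rewrite natrD; lra.
Qed.


Lemma sgnb_xor a b c d : sgnb a * sgnb b = sgnb c * sgnb d -> a (+) c = b (+) d.
Proof. by case: a; case: b; case: c; case: d => //= /eqP. Qed.

Lemma propagate h (P : {set 'I_h * 'I_h}) x0 (f : Hv h -> bool) :
  (forall C C', C \in component P x0 -> C' \in component P x0 ->
     gedge P C C' -> f C = f C') ->
  forall C, C \in component P x0 -> f C = f x0.
Proof.
move=> Hf C; rewrite inE => /connectP [p pth ->].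
suff H : forall x, connect (gedge P) x0 x -> path (gedge P) x p ->
  f (last x p) = f x by exact: H (connect0 _ _) pth.
clear pth.
elim: p => [|y p IH] x //= cx /andP [exy pth].
have cy : connect (gedge P) x0 y by apply: connect_trans cx (connect1 exy).
rewrite (IH y cy pth); apply: esym; apply: Hf => //; by rewrite inE.
Qed.

Lemma largest_gt (R : realType) h (P : {set 'I_h * 'I_h}) (e : R) S :
  0 <= e -> e < 1/3 -> (#|P|%:R : R) = (1 - e) * h%:R ^+ 2 ->
  largest_component P S -> (h < #|S|)%N.
Proof.
move=> e0 e13 HP HS.
have H := comp_size e0 e13 HP HS.
case: HS => [[x0 _] _].
have hp : (0 < h)%N by case: x0 => i; apply: leq_ltn_trans (ltn_ord i).
have hr : (0 : R) < h%:R by rewrite ltr0n.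
rewrite -(ltr_nat R).
have : e * h%:R < (1/3) * h%:R by rewrite ltr_pM2r.
lra.
Qed.

Lemma largest_unique h (P : {set 'I_h * 'I_h}) S S' :
  largest_component P S -> largest_component P S' ->
  (h < #|S|)%N -> (h < #|S'|)%N -> S = S'.
Proof.
move=> [[x ->] _] [[y ->] _] hS hS'.
case: (set_0Vmem (component P x :&: component P y)) => [E | [z]].
  have := max_card (mem (component P x :|: component P y)).
  rewrite card_sum card_ord cardsU E cards0.
  lia.
rewrite inE => /andP [zx zy].
by rewrite -(comp_eq zx) (comp_eq zy).
Qed.

Lemma det_event (R : realType) h (P : {set 'I_h * 'I_h}) (e : R) xi A1 A2 :
  valid_output P e xi A1 A2 ->
  (e < 1/3 -> forall S, largest_component P S ->
      (2 * #|[set C in S | xi C]| < #|S|)%N) ->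
  A2 = [set C | xi C] :\: A1.
Proof.
rewrite /valid_output; case: ifP => He.
  by move=> [-> ->] _; rewrite setDT.
move=> [S [z [HS Hz Hcnt -> ->]]] Hg.
have e13 : e < 1/3 by rewrite ltNge He.
have Hgood := Hg e13 S HS.
case: (HS) => [[x0 ES] _].
have prop : forall C, C \in S -> z C (+) xi C = z x0 (+) xi x0.
  rewrite ES; apply: (propagate (f := fun C => z C (+) xi C)) => C C' CS C'S eCC'.
  apply: sgnb_xor; apply: Hz => //; by rewrite ES.
case Hf: (z x0 (+) xi x0) prop => prop.
  exfalso.
  have E1 : [set C in S | z C] = S :\: [set C | xi C].
    apply/setP => C; rewrite !inE.
    case CS: (C \in S); rewrite ?andbF //=.
    by move: (prop C CS); case: (z C); case: (xi C).
  have E2 : [set C in S | xi C] = S :&: [set C | xi C].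
    by apply/setP => C; rewrite !inE.
  have := cardsID [set C | xi C] S.
  rewrite E1 in Hcnt; rewrite E2 in Hgood. move=> HH; move: Hgood Hcnt HH. set x := #|S :&: _|. set y := #|S :\: _|. set s := #|S|.
  lia.
apply/setP => C; rewrite !inE negbK.
case CS: (C \in S) => //=.
by move: (prop C CS); case: (z C); case: (xi C).
Qed.


Definition wt (R : realType) (eta : R) (b : bool) : R := if b then eta else 1 - eta.

Lemma prod_pattern (R : realType) (eta : R) (I : finType) (A : {set I}) (g : I -> bool) :
  \sum_(w : {ffun I -> bool} | [forall i in A, w i == g i]) \prod_i wt eta (w i)
  = \prod_(i in A) wt eta (g i).
Proof.
pose F i b := (if i \in A then (b == g i)%:R else 1) * wt eta b.
rewrite big_mkcond /=.
transitivity (\sum_(w : {ffun I -> bool}) \prod_i F i (w i)).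
  apply: eq_bigr => w _; rewrite /F big_split /=.
  case: ifP => H.
    rewrite [X in X * _]big1 ?mul1r // => i _; case: ifP => // iA.
    by move/forall_inP: H => /(_ i iA) ->.
  move/negbT/forall_inPn: H => [i iA wi].
  by rewrite (bigD1 i) //= iA (negbTE wi) !mul0r.
rewrite -bigA_distr_bigA /= [RHS]big_mkcond /=.
apply: eq_bigr => i _; rewrite big_bool /F /wt.
case: ifP => iA; last by rewrite /= !mul1r; ring.
by case: (g i) => /=; rewrite ?mul1r ?mul0r ?addr0 ?add0r.
Qed.

Lemma prod_total (R : realType) (eta : R) (I : finType) :
  \sum_(w : {ffun I -> bool}) \prod_i wt eta (w i) = 1.
Proof.
have := prod_pattern eta (set0 : {set I}) (fun _ => true).
rewrite big_set0 => E; rewrite -[RHS]E.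
apply: eq_bigl => w.
by apply/esym/forall_inP => i; rewrite inE.
Qed.

Lemma union_bound (R : realType) (I J : finType) (f : I -> R) (P : pred I)
    (Rj : pred J) (Q : J -> pred I) :
  (forall i, 0 <= f i) ->
  (forall i, P i -> exists j, Rj j && Q j i) ->
  \sum_(i | P i) f i <= \sum_(j | Rj j) \sum_(i | Q j i) f i.
Proof.
move=> f0 HP.
rewrite (eq_bigr (fun j => \sum_i (if Q j i then f i else 0))); last first.
  by move=> j _; rewrite big_mkcond.
rewrite exchange_big /= big_mkcond /=.
apply: ler_sum => i _.
case: ifP => Pi; last by apply: sumr_ge0 => j _; case: ifP.
have [j /andP [Rjj Qji]] := HP i Pi.
rewrite (bigD1 j) //= Qji lerDl.
by apply: sumr_ge0 => j' _; case: ifP.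
Qed.


Lemma term_sq (R : realType) (eta : R) s t :
  0 <= eta -> eta <= 1/2 -> (s <= 2 * t)%N -> (t <= s)%N ->
  (eta ^+ t * (1 - eta) ^+ (s - t)) ^+ 2 <= (eta * (1 - eta)) ^+ s.
Proof.
move=> e0 e12 st ts.
set d := (2 * t - s)%N.
have E1 : (t * 2 = s + d)%N by rewrite /d; lia.
have E2 : (s = (s - t) * 2 + d)%N by rewrite /d; lia.
have L : (eta ^+ t * (1 - eta) ^+ (s - t)) ^+ 2
    = eta ^+ s * (eta ^+ d * (1 - eta) ^+ ((s - t) * 2)).
  by rewrite exprMn -!exprM E1 exprD mulrA.
have Rr : (eta * (1 - eta)) ^+ s
    = eta ^+ s * ((1 - eta) ^+ ((s - t) * 2) * (1 - eta) ^+ d).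
  by rewrite exprMn -exprD -E2.
rewrite L Rr ler_wpM2l ?exprn_ge0 // [X in _ <= X]mulrC.
rewrite ler_wpM2r ?exprn_ge0 //; try lra.
by apply: lerXn2r; rewrite ?nnegrE; lra.
Qed.

Lemma expo (R : realType) (eta : R) (s k n : nat) :
  0 <= eta -> eta <= 1/2 -> (0 < n)%N ->
  (4 * k)%:R * ln (n%:R : R) <= (1 - 2 * eta) ^+ 2 * s%:R ->
  (4 * eta * (1 - eta)) ^+ s <= (n%:R ^+ (4 * k))^-1.
Proof.
move=> e0 e12 n0 H.
set delta := (1 - 2 * eta) ^+ 2 in H *.
have qE : 4 * eta * (1 - eta) = 1 + - delta by rewrite /delta; ring.
have qp : 0 <= 4 * eta * (1 - eta) by apply: mulr_ge0; [lra|lra].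
apply: le_trans (_ : expR (- delta) ^+ s <= _).
  apply: lerXn2r; rewrite ?nnegrE //; first exact: expR_ge0.
  by rewrite qE; exact: expR_ge1Dx.
rewrite -expRM_natr.
apply: le_trans (_ : expR (- ((4 * k)%:R * ln (n%:R : R))) <= _).
  rewrite ler_expR mulNr lerN2; exact: H.
rewrite expRN expRM_natl lnK //.
by rewrite posrE ltr0n.
Qed.

Lemma prodS (R : realType) h (eta : R) (S T : {set Hv h}) :
  T \subset S ->
  \prod_(C in S) wt eta (C \in T) = eta ^+ #|T| * (1 - eta) ^+ (#|S| - #|T|).
Proof.
move=> TS; rewrite (big_setID T) /=.
rewrite (setIidPr TS) -(cardsDS TS).
rewrite (eq_bigr (fun _ => eta)); last by move=> C CT; rewrite /wt CT.
rewrite [X in _ * X](eq_bigr (fun _ => 1 - eta)); last first.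
  by move=> C; rewrite inE => /andP [/negbTE -> _].
by rewrite !prodr_const.
Qed.

Lemma S_bound (R : realType) h (eta X : R) (S : {set Hv h}) :
  0 <= eta -> eta <= 1/2 -> 0 <= X -> (4 * eta * (1 - eta)) ^+ #|S| <= X ^+ 2 ->
  \sum_(T in powerset S | (#|S| <= 2 * #|T|)%N) \prod_(C in S) wt eta (C \in T) <= X.
Proof.
move=> e0 e12 X0 HX.
set s := #|S| in HX *.
have p2 : (0 : R) < 2 ^+ s by rewrite exprn_gt0.
have each : forall T, T \in powerset S -> (s <= 2 * #|T|)%N ->
    \prod_(C in S) wt eta (C \in T) <= X / 2 ^+ s.
  move=> T; rewrite powersetE => TS sT.
  rewrite prodS //.
  have tS : (#|T| <= s)%N by exact: subset_leq_card.
  rewrite -ler_sqr ?nnegrE; last 2 first.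
  - by apply: mulr_ge0; apply: exprn_ge0; lra.
  - by apply: divr_ge0 => //; apply: ltW.
  apply: le_trans (term_sq e0 e12 sT tS) _.
  have E1 : (eta * (1 - eta)) ^+ s = (4 * eta * (1 - eta)) ^+ s / 4 ^+ s.
    have -> : 4 * eta * (1 - eta) = 4 * (eta * (1 - eta)) by ring.
    rewrite [(4 * _) ^+ _]exprMn mulrAC mulfV ?mul1r //.
    by rewrite expf_neq0 // pnatr_eq0.
  have E2 : (X / 2 ^+ s) ^+ 2 = X ^+ 2 / 4 ^+ s.
    rewrite expr_div_n -exprM mulnC exprM.
    by have -> : (2 : R) ^+ 2 = 4 by rewrite expr2 -natrM.
  rewrite E1 E2 ler_pM2r //.
  by rewrite invr_gt0 exprn_gt0.
apply: le_trans (_ : \sum_(T in powerset S) X / 2 ^+ s <= _).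
  rewrite [X in _ <= X](bigID (fun T : {set Hv h} => (s <= 2 * #|T|)%N)) /=.
  apply: ler_wpDr.
    by apply: sumr_ge0 => T _; apply: divr_ge0 => //; apply: ltW.
  by apply: ler_sum => T /andP [TS sT]; apply: each.
rewrite sumr_const card_powerset -/s -[X in X <= _]mulr_natr natrX mulfVK //.
by rewrite gt_eqF.
Qed.


Lemma prod_reindex (R : realType) p h (u : 'I_p) (S T : {set Hv h}) (eta : R) :
  \prod_(i in [set i : 'I_p * Hv h | (i.1 == u) && (i.2 \in S)]) wt eta (i.2 \in T)
  = \prod_(C in S) wt eta (C \in T).
Proof.
rewrite (eq_bigl (fun i : 'I_p * Hv h => (i.1 == u) && (i.2 \in S))); last first.
  by move=> i; rewrite inE.
rewrite -(pair_big_dep (fun a => a == u) (fun _ C => C \in S) (fun _ C => wt eta (C \in T))) /=.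
by rewrite big_pred1_eq.
Qed.


Lemma sub_sum (R : realType) (I : finType) (f : I -> R) (P1 P2 : pred I) :
  (forall i, P1 i -> P2 i) -> (forall i, 0 <= f i) ->
  \sum_(i | P1 i) f i <= \sum_(i | P2 i) f i.
Proof.
move=> H f0; rewrite [X in X <= _]big_mkcond [X in _ <= X]big_mkcond.
apply: ler_sum => i _; case: ifP => H1; first by rewrite H.
by case: ifP.
Qed.

Lemma wt_ge0 (R : realType) (eta : R) (I : finType) (w : {ffun I -> bool}) :
  0 <= eta -> eta <= 1/2 -> 0 <= \prod_i wt eta (w i).
Proof.
move=> e0 e12; apply: prodr_ge0 => i _; rewrite /wt; case: (w i); lra.
Qed.

Unset Implicit Arguments.
Theorem mainTheorem13 (R : realType) (k n p m : nat) (eta eps : R)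
  (epsu : 'I_p -> R) (P : 'I_p -> {set 'I_(m %/ (2 * p)) * 'I_(m %/ (2 * p))}) :
  (1 <= k)%N -> (2 <= n)%N -> 0 <= eta -> eta < 1 / 2 ->
  (0 < p)%N -> (p <= n ^ k)%N -> (2 * p %| m)%N ->
  24 * k%:R / (1 - 2 * eta) ^+ 2 * ln (n%:R : R) <= m%:R / p%:R ->
  (forall u, 0 <= epsu u <= 1) ->
  (forall u, (#|P u|%:R : R) = (1 - epsu u) * m%:R ^+ 2 / (4 * p%:R ^+ 2)) ->
  (\sum_(u < p) epsu u) / p%:R <= eps ->
  (forall (w : {ffun 'I_p * Hv (m %/ (2 * p)) -> bool})
          (A1 A2 : 'I_p -> {set Hv (m %/ (2 * p))}),
      (forall u, valid_output (P u) (epsu u) (fun C => w (u, C)) (A1 u) (A2 u)) ->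
      \sum_(u < p) (#|A1 u|%:R : R) <= 4 * eps * m%:R)
  /\
  1 - (n%:R : R) ^- k <=
    prob eta (fun w : {ffun 'I_p * Hv (m %/ (2 * p)) -> bool} =>
      forall (u : 'I_p) (A1 A2 : {set Hv (m %/ (2 * p))}),
        valid_output (P u) (epsu u) (fun C => w (u, C)) A1 A2 ->
        A2 = [set C | w (u, C)] :\: A1).
Proof.
move=> k1 n2 e0 e12 p0 pn dvd Hm Heps HP Hsum.
set h := (m %/ (2 * p))%N in P HP Hsum *.
have pR : (0 : R) < p%:R by rewrite ltr0n.
have mR : (m%:R : R) = h%:R * 2 * p%:R.
  by rewrite -natrM -natrM -mulnA /h divnK.
have HPu : forall u, (#|P u|%:R : R) = (1 - epsu u) * h%:R ^+ 2.
  move=> u; rewrite HP mR; field.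
  by rewrite gt_eqF.
have h0 : (0 : R) <= h%:R by rewrite ler0n.
split.
  move=> w A1 A2 Hv.
  apply: le_trans (_ : \sum_(u < p) 8 * epsu u * h%:R <= _).
    apply: ler_sum => u _; apply: A1_bound (Hv u) => //.
    by case/andP: (Heps u).
  have -> : \sum_(u < p) 8 * epsu u * h%:R = (\sum_(u < p) epsu u) * (8 * h%:R).
    by rewrite mulr_suml; apply: eq_bigr => u _; ring.
  have Hs : \sum_(u < p) epsu u <= eps * p%:R by rewrite -ler_pdivrMr.
  have -> : 4 * eps * m%:R = (eps * p%:R) * (8 * h%:R) by rewrite mR; ring.
  by rewrite ler_wpM2r // mulr_ge0.
have n0 : (0 < n)%N by exact: ltnW n2.
have nR : (0 : R) < n%:R by rewrite ltr0n.
set X : R := (n%:R ^+ (2 * k))^-1.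
have X0 : 0 <= X by rewrite /X invr_ge0 exprn_ge0 // ltW.
have e12' : eta <= 1/2 by lra.
pose bad (u : 'I_p) (w : {ffun 'I_p * Hv h -> bool}) :=
  (epsu u < 1/3) && [exists S : {set Hv h},
     `[< largest_component (P u) S >] && (#|S| <= 2 * #|[set C in S | w (u, C)]|)%N].
pose Good w := [forall u, ~~ bad u w].
have delta0 : 0 < (1 - 2 * eta) ^+ 2 by rewrite exprn_gt0 //; lra.
have Hm2 : 24 * k%:R * ln (n%:R : R) <= 2 * h%:R * (1 - 2 * eta) ^+ 2.
  have : m%:R / p%:R = 2 * h%:R :> R by rewrite mR; field; rewrite gt_eqF.
  move=> E; rewrite E in Hm.
  have := ler_wpM2r (ltW delta0) Hm.
  have -> : 24 * k%:R / (1 - 2 * eta) ^+ 2 * ln (n%:R : R) * (1 - 2 * eta) ^+ 2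
     = 24 * k%:R * ln (n%:R : R).
    by field; apply/eqP => H0; move: e12; rewrite -subr_gt0 -(ltr_pM2l (_ : (0:R) < 2)) // mulr0; lra.
  done.
have lnn0 : 0 <= ln (n%:R : R) by apply: ln_ge0; rewrite ler1n.
have bad_bound : forall u, \sum_(w | bad u w) \prod_i wt eta (w i) <= X.
  move=> u.
  have [He|He] := lerP (1/3) (epsu u).
    rewrite big_pred0 // => w; rewrite /bad.
    by rewrite ltNge He.
  have eu0 : 0 <= epsu u by case/andP: (Heps u).
  apply: le_trans (_ : \sum_(S : {set Hv h} | `[< largest_component (P u) S >])
      \sum_(w : {ffun 'I_p * Hv h -> bool} | (#|S| <= 2 * #|[set C in S | w (u, C)]|)%N) \prod_i wt eta (w i) <= _).
    apply: union_bound => [w|w]; first exact: wt_ge0.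
    rewrite /bad He /= => /existsP [S /andP [HS HSc]].
    by exists S; rewrite HS HSc.
  apply: le_trans (_ : \sum_(S : {set Hv h} | `[< largest_component (P u) S >]) X <= _).
    apply: ler_sum => S /asboolP HS.
    set s := #|S|.
    apply: le_trans (_ : \sum_(T in powerset S | (s <= 2 * #|T|)%N)
       \sum_(w : {ffun 'I_p * Hv h -> bool} | [forall i in [set i : 'I_p * Hv h | (i.1 == u) && (i.2 \in S)],
                   w i == (i.2 \in T)]) \prod_i wt eta (w i) <= _).
      apply: union_bound => [w|w Hw]; first exact: wt_ge0.
      exists [set C in S | w (u, C)].
      rewrite powersetE Hw andbT /=.
      apply/andP; split; first by apply/subsetP => C; rewrite inE => /andP [].
      apply/forall_inP => -[a C]; rewrite inE /= => /andP [/eqP -> CS].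
      by rewrite inE CS.
    rewrite (eq_bigr (fun T : {set Hv h} => \prod_(C in S) wt eta (C \in T))); last first.
      by move=> T _; rewrite prod_pattern prod_reindex.
    apply: S_bound => //.
    have -> : X ^+ 2 = (n%:R ^+ (4 * k))^-1.
      by rewrite /X exprVn -exprM; congr (_ ^+ _)^-1; rewrite mulnC mulnA.
    apply: expo => //.
    have cs := comp_size eu0 He (HPu u) HS.
    have sh : (4/3) * h%:R <= (s%:R : R).
      have : epsu u * h%:R <= (1/3) * h%:R by apply: ler_wpM2r => //; apply: ltW.
      rewrite /s; lra.
    have : (1 - 2 * eta) ^+ 2 * ((4/3) * h%:R) <= (1 - 2 * eta) ^+ 2 * s%:R.
      by apply: ler_wpM2l => //; apply: ltW.
    rewrite natrM => H.
    have t0 : 0 <= 24 * k%:R * ln (n%:R : R).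
      by apply: mulr_ge0 => //; apply: mulr_ge0; rewrite ?ler0n.
    have G1 : 4%:R * k%:R * ln (n%:R : R) = (24 * k%:R * ln (n%:R : R)) / 6 by field.
    have G2 : (1 - 2 * eta) ^+ 2 * ((4/3) * h%:R) = (2 * h%:R * (1 - 2 * eta) ^+ 2) * (2/3)
      by field.
    rewrite G1; rewrite G2 in H; lra.
  case: (pickP (fun S => `[< largest_component (P u) S >])) => [S0 HS0 | none].
    rewrite (eq_bigl (pred1 S0)) ?big_pred1_eq // => S /=.
    apply/idP/idP => [/asboolP HS | /eqP ->//].
    move/asboolP: HS0 => HS0.
    apply/eqP; exact: (largest_unique HS HS0 (largest_gt eu0 He (HPu u) HS)
      (largest_gt eu0 He (HPu u) HS0)).
  by rewrite big_pred0.
have GoodE : forall w, Good w ->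
    forall (u : 'I_p) (A1 A2 : {set Hv h}),
      valid_output (P u) (epsu u) (fun C => w (u, C)) A1 A2 ->
      A2 = [set C | w (u, C)] :\: A1.
  move=> w HG u A1 A2 Hval; apply: (det_event (xi := fun C => w (u, C)) Hval) => e13 S HS.
  move/forallP: HG => /(_ u); rewrite /bad e13 /= negb_exists => /forallP /(_ S).
  have -> : `[< largest_component (P u) S >] = true by apply/asboolP.
  by rewrite /= -ltnNge.
rewrite /prob.
apply: le_trans (_ : \sum_(w | Good w) \prod_i wt eta (w i) <= _); last first.
  apply: sub_sum => [w Gw|w]; last exact: wt_ge0.
  by apply/asboolP; exact: GoodE.
have tot := prod_total eta ('I_p * Hv h)%type.
rewrite (bigID Good) /= in tot.
have -> : \sum_(w | Good w) \prod_i wt eta (w i)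
    = 1 - \sum_(w | ~~ Good w) \prod_i wt eta (w i).
  by apply/eqP; rewrite eq_sym subr_eq; apply/eqP; exact: esym tot.
rewrite lerD2l lerN2.
apply: le_trans (_ : \sum_(u < p) \sum_(w | bad u w) \prod_i wt eta (w i) <= _).
  apply: union_bound => [w|w]; first exact: wt_ge0.
  rewrite /Good negb_forall => /existsP [u]; rewrite negbK => Hb.
  by exists u.
apply: le_trans (_ : \sum_(u < p) X <= _); first by apply: ler_sum => u _.
rewrite sumr_const card_ord -[X *+ p]mulr_natl.
have -> : (n%:R : R) ^- k = n%:R ^+ k * X.
  rewrite /X mulnC exprM expr2 invfM mulrA mulfV ?mul1r //.
  by rewrite expf_neq0 // gt_eqF.
rewrite ler_wpM2r //.
by rewrite -natrX ler_nat.
Qed.
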